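(* Let $\Gamma$ be a finite connected tetravalent $G$-half-arc-transitive graph with $G\leq\mathrm{Aut}(\Gamma)$, and let $N$ be a solvable normal subgroup of $G$. If $G$ is non-solvable, then $\Gamma$ is a normal cover of $\Gamma_N$ and $N$ is semiregular on $V(\Gamma)$.
   Context: $\Gamma$ is $G$-half-arc-transitive if $G$ is transitive on vertices and edges but not on arcs. For $N\trianglelefteq G$, the normal quotient $\Gamma_N$ has as vertices the $N$-orbits on $V(\Gamma)$, two distinct orbits adjacent iff some edge of $\Gamma$ joins them. $\Gamma$ is a normal cover of $\Gamma_N$ if $\Gamma_N$ has the same valency as $\Gamma$. A permutation group is semiregular if all point stabilizers are trivial. *)

(* Defs.v *)
From mathcomp Require Import all_boot all_fingroup all_solvable.
Set Implicit Arguments. Unset Strict Implicit. Unset Printing Implicit Defensive.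
Local Open Scope group_scope.

Section Graphs.
Variable V : finType.

Definition simple_graph (e : rel V) := symmetric e /\ irreflexive e.

Definition graph_aut (e : rel V) : {set {perm V}} :=
  [set g : {perm V} | [forall x, forall y, e (g x) (g y) == e x y]].

Definition connected_graph (e : rel V) := forall x y : V, connect e x y.

Definition regular_of_valency (e : rel V) (k : nat) :=
  forall x : V, #|[set y | e x y]| = k.

Definition vertex_transitive (G : {set {perm V}}) :=
  forall x y : V, exists2 g, g \in G & g x = y.

Definition edge_transitive (e : rel V) (G : {set {perm V}}) :=
  forall x y u v : V, e x y -> e u v ->
    exists2 g, g \in G & (g x = u /\ g y = v) \/ (g x = v /\ g y = u).

Definition arc_transitive (e : rel V) (G : {set {perm V}}) :=
  forall x y u v : V, e x y -> e u v ->
    exists2 g, g \in G & g x = u /\ g y = v.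

Definition half_arc_transitive (e : rel V) (G : {set {perm V}}) :=
  [/\ vertex_transitive G, edge_transitive e G & ~ arc_transitive e G].

(* Normal quotient Gamma_N: vertices are the N-orbits on V;
   two distinct orbits are adjacent iff some edge joins them. *)
Definition quot_vertices (N : {set {perm V}}) : {set {set V}} :=
  [set orbit 'P N x | x : V].

Definition quot_adj (e : rel V) (N : {set {perm V}}) (B C : {set V}) : bool :=
  (B != C) && [exists x in B, exists y in C, e x y].

Definition quot_regular_of_valency (e : rel V) (N : {set {perm V}}) (k : nat) :=
  forall B, B \in quot_vertices N ->
    #|[set C in quot_vertices N | quot_adj e N B C]| = k.

Definition normal_cover (e : rel V) (N : {set {perm V}}) (k : nat) :=
  regular_of_valency e k /\ quot_regular_of_valency e N k.

Definition semiregular_perm (N : {group {perm V}}) :=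
  forall x : V, 'C_N[x | 'P] = 1.

End Graphs.

(* Main.v *)
Require Import Defs.
From mathcomp Require Import all_boot all_fingroup all_solvable.
From mathcomp Require Import zify.
Set Implicit Arguments. Unset Strict Implicit. Unset Printing Implicit Defensive.
Local Open Scope group_scope.

Section Dihedral.
Variables (gT : finGroupType) (T : finType) (to : {action gT &-> T}).
Variables (G : {group gT}) (Bs : {set T}) (adj : rel T).
Hypothesis HBs : forall g B, g \in G -> B \in Bs -> to B g \in Bs.
Hypothesis Hadj : forall g B C, g \in G -> adj (to B g) (to C g) = adj B C.
Hypothesis Hsym : symmetric adj.
Hypothesis Hirr : irreflexive adj.
Hypothesis Hval : forall B, B \in Bs -> #|[set C in Bs | adj B C]| <= 2.
Hypothesis Hconn : forall (P : pred T) B0, B0 \in Bs -> P B0 ->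
  (forall B C, B \in Bs -> C \in Bs -> adj B C -> P B -> P C) ->
  forall B, B \in Bs -> P B.
Variables B0 C0 : T.
Hypotheses (HB0 : B0 \in Bs) (HC0 : C0 \in Bs) (HBC0 : adj B0 C0).

Definition isArc (a : T * T) := [&& a.1 \in Bs, a.2 \in Bs & adj a.1 a.2].

Lemma uniq3 C B D D' : C \in Bs -> B \in Bs -> D \in Bs -> D' \in Bs ->
  adj C B -> adj C D -> adj C D' -> B != D -> D' != B -> D' = D.
Proof.
move=> HC HB HD HD' aB aD aD' nBD nD'B; apply/eqP; apply: contraTT (Hval HC) => nD'D.
have sub : D' |: [set B; D] \subset [set C1 in Bs | adj C C1].
  by apply/subsetP=> x; rewrite !inE => /or3P[] /eqP ->; rewrite ?HB ?HD ?HD' ?aB ?aD ?aD'.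
have c3 : #|D' |: [set B; D]| = 3.
  by rewrite cardsU1 cards2 nBD !inE negb_or nD'B nD'D.
by rewrite -ltnNge; move: (subset_leq_card sub); rewrite c3.
Qed.


Definition other B C := odflt B [pick D in Bs | adj C D && (D != B)].

Lemma otherP B C : isArc (B, C) ->
  [/\ other B C \in Bs, adj C (other B C) &
      forall D, D \in Bs -> adj C D -> D = B \/ D = other B C].
Proof.
case/and3P=> /= HB HC aBC; rewrite /other.
case: pickP => [D /and3P[HD aCD nDB] | none] /=.
  split=> // D' HD' aD'; case: (eqVneq D' B) => [-> | nD'B]; first by left.
  by right; apply: (uniq3 HC HB HD HD') => //; [rewrite Hsym | rewrite eq_sym].
split=> //; first by rewrite Hsym.
move=> D HD aD; left; apply/eqP; move: (none D); rewrite HD aD /=.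
by move/negbT; rewrite negbK.
Qed.


Definition sa (a : T * T) := if isArc a then (a.2, other a.1 a.2) else a.
Definition ra (a : T * T) := (a.2, a.1).
Definition ta (a : T * T) g := (to a.1 g, to a.2 g).

Lemma arc_r a : isArc a -> isArc (ra a).
Proof. by case: a => B C /and3P[/= *]; rewrite /isArc /= Hsym; apply/and3P. Qed.

Lemma arc_s a : isArc a -> isArc (sa a).
Proof.
case: a => B C HA; rewrite /sa HA /=; have [H1 H2 _] := otherP HA.
by case/and3P: HA => /= _ HC _; apply/and3P.
Qed.

Lemma srs a : isArc a -> sa (ra (sa a)) = ra a.
Proof.
case: a => B C HA; have [H1 H2 H3] := otherP HA.
have HA' : isArc (other B C, C).
  by case/and3P: HA => /= _ HC _; rewrite /isArc /= H1 HC Hsym.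
rewrite /sa HA /ra /= HA' /=; congr (_, _).
have [_ _ H4] := otherP HA'.
case/and3P: HA => /= HB _ aBC.
have aCB : adj C B by rewrite Hsym.
have [E | E] := H4 B HB aCB; last by [].
by rewrite -E.
Qed.

Lemma sa_inj : injective sa.
Proof.
move=> a b.
case Ha: (isArc a); case Hb: (isArc b) => E.
- have : ra (sa (ra (sa a))) = ra (sa (ra (sa b))) by rewrite E.
  by rewrite !srs // => /(congr1 ra); case: a b {Ha Hb E} => ? ? [? ?] /= [-> ->].
- by move: (arc_s Ha); rewrite E /sa Hb Hb.
- by move: (arc_s Hb); rewrite -E /sa Ha Ha.
- by move: E; rewrite /sa Ha Hb.
Qed.

Lemma arc_t a g : g \in G -> isArc (ta a g) = isArc a.
Proof.
move=> Hg; case: a => B C; rewrite /isArc /ta /= Hadj //.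
have E : forall X, (to X g \in Bs) = (X \in Bs).
  move=> X; apply/idP/idP => [H | H]; last exact: HBs.
  by rewrite -(actK to g X) HBs ?groupV.
by rewrite !E.
Qed.

Lemma other_t B C g : g \in G -> isArc (B, C) ->
  to (other B C) g = other (to B g) (to C g).
Proof.
move=> Hg HA; have HA' : isArc (to B g, to C g) by move: (arc_t (B, C) Hg); rewrite /ta /= => ->.
have [H1 H2 H3] := otherP HA; have [K1 K2 K3] := otherP HA'.
have aa : adj (to C g) (to (other B C) g) by rewrite Hadj.
have [E|E] := K3 (to (other B C) g) (HBs Hg H1) aa; last by [].
have EB : other B C = B by apply: (act_inj to g).
have HD : to (other (to B g) (to C g)) g^-1 \in Bs by rewrite HBs ?groupV.
have aD : adj C (to (other (to B g) (to C g)) g^-1).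
  by rewrite -{1}(actK to g C) Hadj ?groupV.
have [E2|E2] := H3 _ HD aD.
  by rewrite E; apply: (act_inj to g^-1); rewrite actK E2.
by apply: (act_inj to g^-1); rewrite actK E2.
Qed.

Lemma sa_t a g : g \in G -> ta (sa a) g = sa (ta a g).
Proof.
move=> Hg; rewrite /sa arc_t //; case HA: (isArc a) => //.
by case: a HA => B C HA; rewrite /ta /= other_t.
Qed.


Lemma iter_t n a g : g \in G -> ta (iter n sa a) g = iter n sa (ta a g).
Proof. by move=> Hg; elim: n => //= n IH; rewrite sa_t // IH. Qed.

Lemma fcon_t a b g : g \in G -> fconnect sa a b -> fconnect sa (ta a g) (ta b g).
Proof.
move=> Hg /iter_findex <-; rewrite iter_t //; exact: fconnect_iter.
Qed.

Lemma iter_arc n a : isArc a -> isArc (iter n sa a).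
Proof. by move=> Ha; elim: n => //= n IH; apply: arc_s. Qed.

Lemma fcon_arc a b : isArc a -> fconnect sa a b -> isArc b.
Proof. by move=> Ha /iter_findex <-; apply: iter_arc. Qed.

Lemma fcon_r a b : isArc a -> fconnect sa a b -> fconnect sa (ra b) (ra a).
Proof.
move=> Ha /iter_findex <-; elim: (findex _ _ _) => [|n IH]; first exact: connect0.
rewrite iterS; apply: connect_trans IH.
by rewrite -(srs (iter_arc n Ha)); apply: fconnect1.
Qed.

Definition a0 := (B0, C0).
Lemma arc0 : isArc a0. Proof. by apply/and3P. Qed.

Definition U a := fconnect sa a0 a || fconnect sa (ra a0) a.

Lemma U_r a : isArc a -> U a -> U (ra a).
Proof.
rewrite /U => Ha /orP[H | H]; apply/orP.
  by right; rewrite (fconnect_sym sa_inj); apply: fcon_r arc0 H.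
left; rewrite (fconnect_sym sa_inj).
exact: (fcon_r (arc_r arc0) H).
Qed.

Lemma U_s a : U a -> U (sa a).
Proof.
by rewrite /U; case/orP=> H; apply/orP; [left | right]; apply: connect_trans H (fconnect1 _ _).
Qed.

Lemma allU a : isArc a -> U a.
Proof.
case: a => B C; move=> HA; case/and3P: (HA) => /= HB _ _.
pose P := fun B => [forall C, isArc (B, C) ==> U (B, C)].
suff: P B by move/forallP/(_ C)/implyP; apply.
apply: (Hconn (B0 := B0)) => //.
  apply/forallP=> C1; apply/implyP=> HA1.
  case: (eqVneq C1 C0) => [-> | nC].
    by apply/orP; left; apply: connect0.
  have HA2 : isArc (ra a0) by apply: arc_r arc0.
  have [K1 K2 K3] := otherP HA2.
  case/and3P: HA1 => /= _ HC1 aC1.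
  have [E|E] := K3 C1 HC1 aC1; first by rewrite E eqxx in nC.
  have -> : (B0, C1) = sa (ra a0) by rewrite /sa HA2 /= -E.
  by apply: U_s; apply/orP; right; apply: connect0.
move=> B1 C1 HB1 HC1 aBC1 /forallP PB1; apply/forallP=> D; apply/implyP=> HA1.
have HA0 : isArc (B1, C1) by apply/and3P.
have U0 : U (B1, C1) by have := PB1 C1; rewrite HA0.
have [K1 K2 K3] := otherP HA0.
case/and3P: HA1 => /= _ HD aD.
have [E|E] := K3 D HD aD.
  by rewrite E; apply: (U_r HA0).
have -> : (C1, D) = sa (B1, C1) by rewrite /sa HA0 /= -E.
exact: U_s.
Qed.


Lemma ta1 a : ta a 1 = a.
Proof. by case: a => B C; rewrite /ta !act1. Qed.

Lemma taM a g h : ta a (g * h) = ta (ta a g) h.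
Proof. by case: a => B C; rewrite /ta !actM. Qed.

Lemma taK a g : ta (ta a g) g^-1 = a.
Proof. by case: a => B C; rewrite /ta !actK. Qed.

Lemma ta_r a g : ta (ra a) g = ra (ta a g).
Proof. by []. Qed.

Lemma same_r x y z : fconnect sa x y -> fconnect sa z x = fconnect sa z y.
Proof.
move=> Hxy; apply/idP/idP => H; first exact: connect_trans H Hxy.
by apply: connect_trans H _; rewrite (fconnect_sym sa_inj).
Qed.

Definition Hs := [set g in G | fconnect sa a0 (ta a0 g)].

Lemma Hs_group : group_set Hs.
Proof.
apply/group_setP; split; first by rewrite inE group1 ta1 connect0.
move=> g h; rewrite !inE => /andP[Hg cg] /andP[Hh ch]; rewrite groupM //=.
by rewrite taM; apply: connect_trans ch (fcon_t Hh cg).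
Qed.

Canonical Hs_grp := Group Hs_group.

Definition cl x := fconnect sa a0 x.

Lemma key_par g a : ~~ fconnect sa a0 (ra a0) -> g \in G -> isArc a ->
  cl (ta a g) = (cl (ta a0 g) == cl a).
Proof.
move=> dist Hg Ha.
have other_cl : forall x, isArc x -> ~~ cl x -> fconnect sa (ra a0) x.
  by move=> x /allU; rewrite /U /cl; case: (fconnect _ _ _).
have not_both : forall x, fconnect sa (ra a0) x -> ~~ cl x.
  move=> x Hx; apply: contra dist => Hc.
  by rewrite (same_r _ (y := x)) // (fconnect_sym sa_inj).
have Hag : isArc (ta a0 g) by rewrite arc_t // arc0.
case Hc: (cl a).
  have := fcon_t Hg Hc; rewrite /cl => Ht; rewrite eqb_id.
  by rewrite -(same_r _ Ht).
have Hr := fcon_t Hg (other_cl _ Ha (negbT Hc)); rewrite ta_r in Hr.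
case Hc0: (cl (ta a0 g)) => /=.
  have Hr2 := fcon_r arc0 Hc0.
  apply/negbTE/not_both; rewrite -(same_r _ Hr).
  by rewrite (fconnect_sym sa_inj).
have := fcon_r (arc_r arc0) (other_cl _ Hag (negbT Hc0)) => Hr2.
rewrite /cl -(same_r _ Hr) (fconnect_sym sa_inj); exact: Hr2.
Qed.

Lemma der1_Hs : G^`(1) \subset Hs.
Proof.
rewrite derg1 /commutator gen_subG; apply/subsetP=> _ /imset2P[g h Hg Hh ->].
case dist : (fconnect sa a0 (ra a0)).
  rewrite inE groupR //=.
  have Ha : isArc (ta a0 [~ g, h]) by rewrite arc_t ?groupR // arc0.
  case/orP: (allU Ha) => // H.
  exact: connect_trans dist H.
have ndist := negbT dist.
have pM : forall x y, x \in G -> y \in G -> cl (ta a0 (x * y)) = (cl (ta a0 y) == cl (ta a0 x)).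
  by move=> x y Hx Hy; rewrite taM (key_par ndist Hy) // arc_t // arc0.
have pV : forall x, x \in G -> cl (ta a0 x^-1) = cl (ta a0 x).
  move=> x Hx; have := pM _ _ Hx (groupVr Hx); rewrite mulgV ta1 /cl connect0.
  by case: (fconnect _ _ (ta a0 x^-1)); case: (fconnect _ _ (ta a0 x)).
rewrite inE groupR //= -/(cl _) commgEl /conjg mulgA mulgA.
rewrite pM ?groupM ?groupV // pM ?groupM ?groupV // pM ?groupM ?groupV //.
rewrite pV // pV //.
by case: (cl (ta a0 g)); case: (cl (ta a0 h)).
Qed.

Lemma fix_all c : c \in G -> ta a0 c = a0 -> c \in 'C(Bs | to).
Proof.
move=> Hc Hfix.
have iterfix : forall n x, ta x c = x -> ta (iter n sa x) c = iter n sa x.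
  by move=> n x Hx; rewrite iter_t // Hx.
have fixr : ta (ra a0) c = ra a0 by rewrite ta_r Hfix.
have arcfix : forall a, isArc a -> ta a c = a.
  move=> a /allU /orP[] /iter_findex <-; exact: iterfix.
apply/astabP=> B HB.
pose P := fun B => [exists C, isArc (B, C)].
have: P B.
  apply: (Hconn (B0 := B0)) => //; first by apply/existsP; exists C0; apply: arc0.
  move=> B1 C1 HB1 HC1 a1 _; apply/existsP; exists B1.
  by apply: (arc_r (a := (B1, C1))); apply/and3P.
by case/existsP=> C /arcfix; rewrite /ta /= => -[].
Qed.

Lemma comm_fix g h : g \in Hs -> h \in Hs -> ta a0 (g * h) = ta a0 (h * g).
Proof.
rewrite !inE => /andP[Hg /iter_findex Eg] /andP[Hh /iter_findex Eh].
move: Eg Eh; set i := findex _ _ _; set j := findex _ _ _ => Eg Eh.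
by rewrite !taM -Eg -Eh !iter_t // -Eg -Eh -!iterD addnC.
Qed.

Lemma der2_sub : G^`(2) \subset 'C(Bs | to).
Proof.
have sHG : Hs \subset G by apply/subsetP=> x; rewrite inE => /andP[].
apply: subset_trans (dergS 1 der1_Hs) _.
rewrite derg1 /commutator gen_subG; apply/subsetP=> _ /imset2P[g h Hg Hh ->].
apply: fix_all; first by rewrite groupR // (subsetP sHG).
have E : [~ g, h] = (g^-1 * h^-1) * (h^-1 * g^-1)^-1.
  by rewrite invMg !invgK commgEl /conjg !mulgA.
by rewrite E taM comm_fix ?groupV // taK.
Qed.

End Dihedral.

Section Main.
Variables (V : finType) (e : rel V) (G N : {group {perm V}}).
Hypotheses (Hsimp : simple_graph e) (Hcon : connected_graph e).
Hypotheses (Hreg : regular_of_valency e 4) (HGaut : G \subset graph_aut e).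
Hypotheses (Hhat : half_arc_transitive e G) (HN : N <| G).

Notation bl x := (orbit 'P N x).

Lemma esym : symmetric e. Proof. by case: Hsimp. Qed.
Lemma eirr : irreflexive e. Proof. by case: Hsimp. Qed.

Lemma aut g x y : g \in G -> e (g x) (g y) = e x y.
Proof.
move=> Hg; have := subsetP HGaut g Hg; rewrite inE => /forallP/(_ x)/forallP/(_ y).
by move/eqP.
Qed.

Lemma sNG : N \subset G. Proof. by case/andP: HN. Qed.

Lemma conn_ind (P : pred V) x y : (forall z w, e z w -> P z -> P w) -> P x -> P y.
Proof.
move=> HP Px; case/connectP: (Hcon x y) => p.
elim: p x Px => [|z p IH] x Px /=; first by move=> _ ->.
by case/andP=> exz pz Ey; apply: (IH z) => //; apply: HP Px.
Qed.

Lemma blP x y : reflect (exists2 n, n \in N & n x = y) (y \in bl x).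
Proof. by apply: (iffP orbitP) => [] [n Hn <-]; exists n. Qed.

Lemma bl_N n x : n \in N -> bl (n x) = bl x.
Proof. by move=> Hn; rewrite -apermE orbit_act. Qed.

Lemma bl_act g x : g \in G -> setact 'P (bl x) g = bl (g x).
Proof.
move=> Hg; rewrite setactE; apply/setP=> z; apply/imsetP/blP.
  case=> _ /blP[n Hn <-] ->; exists (n ^ g); first by rewrite memJ_norm // (subsetP (normal_norm HN)).
  by rewrite /conjg !permM permK.
case=> n Hn <-; exists ((n ^ g^-1) x).
  by apply/blP; exists (n ^ g^-1); rewrite // memJ_norm // (subsetP (normal_norm HN)) ?groupV.
by rewrite /= apermE /conjg !permM invgK permKV.
Qed.


Lemma sGN g : g \in N -> g \in G. Proof. exact: (subsetP sNG). Qed.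

Variables v0 u0 : V.
Hypothesis Hvu : e v0 u0.

Definition arc x y := [exists g in G, (g v0 == x) && (g u0 == y)].

Lemma arcP x y : reflect (exists2 g, g \in G & g v0 = x /\ g u0 = y) (arc x y).
Proof.
apply: (iffP existsP) => [[g /andP[Hg /andP[/eqP <- /eqP <-]]] | [g Hg [<- <-]]].
  by exists g.
by exists g; rewrite Hg !eqxx.
Qed.

Lemma arc_e x y : arc x y -> e x y.
Proof. by case/arcP=> g Hg [<- <-]; rewrite aut. Qed.

Lemma arc_act x y g : g \in G -> arc x y -> arc (g x) (g y).
Proof.
move=> Hg /arcP[h Hh [<- <-]]; apply/arcP; exists (h * g); rewrite ?groupM //.
by rewrite !permM.
Qed.

Lemma arc_or x y : e x y -> arc x y || arc y x.
Proof.
case: Hhat => _ Het _ Hxy.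
have [g Hg [[E1 E2] | [E1 E2]]] := Het v0 u0 x y Hvu Hxy.
  by apply/orP; left; apply/arcP; exists g.
by apply/orP; right; apply/arcP; exists g.
Qed.

Lemma arc_anti x y : arc x y -> ~~ arc y x.
Proof.
move=> /arcP[g1 Hg1 [E1 E2]]; apply/negP => /arcP[g2 Hg2 [F1 F2]].
case: Hhat => _ _; apply.
pose f := g1 * g2^-1.
have Hf : f \in G by rewrite groupM ?groupV.
have fv : f v0 = u0 by rewrite permM E1 -F2 permK.
have fu : f u0 = v0 by rewrite permM E2 -F1 permK.
have H : forall x y, e x y -> exists2 h, h \in G & h v0 = x /\ h u0 = y.
  move=> x' y' /arc_or /orP[/arcP[h Hh [<- <-]] | /arcP[h Hh [<- <-]]].
    by exists h.
  by exists (f * h); [exact: groupM Hf Hh | split; rewrite permM; [rewrite fv | rewrite fu]].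
move=> x1 y1 x2 y2 /H[h1 Hh1 [<- <-]] /H[h2 Hh2 [<- <-]].
by exists (h1^-1 * h2); rewrite ?groupM ?groupV // !permM !permK.
Qed.


Definition outs x := [set y | arc x y].
Definition ins x := [set y | arc y x].
Definition nbr x := [set y | e x y].

Lemma vt x : exists2 g, g \in G & g v0 = x.
Proof. by case: Hhat => Hvt _ _; apply: Hvt. Qed.

Lemma card_nbr_split x : #|outs x| + #|ins x| = 4.
Proof.
rewrite -(Hreg x) -cardsUI.
have -> : outs x :&: ins x = set0.
  apply/setP=> y; rewrite !inE; apply/negbTE; apply/nandP.
  by case H: (arc x y); [right; apply: arc_anti | left].
rewrite cards0 addn0; have -> // : outs x :|: ins x = [set y | e x y].
apply/setP=> y; rewrite !inE.
apply/idP/idP => [/orP[/arc_e // | /arc_e]| /arc_or //]; by rewrite esym.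
Qed.

Lemma card_act (S : {set V}) (g : {perm V}) : #|[set g y | y in S]| = #|S|.
Proof. by apply: card_imset; apply: perm_inj. Qed.

Lemma outs_act g x : g \in G -> outs (g x) = [set g y | y in outs x].
Proof.
move=> Hg; apply/setP=> z; rewrite inE; apply/idP/imsetP.
  move=> H; exists (g^-1 z); last by rewrite permKV.
  by rewrite inE; have := arc_act (groupVr Hg) H; rewrite permK.
by case=> y; rewrite inE => H ->; apply: arc_act.
Qed.

Lemma ins_act g x : g \in G -> ins (g x) = [set g y | y in ins x].
Proof.
move=> Hg; apply/setP=> z; rewrite inE; apply/idP/imsetP.
  move=> H; exists (g^-1 z); last by rewrite permKV.
  by rewrite inE; have := arc_act (groupVr Hg) H; rewrite permK.
by case=> y; rewrite inE => H ->; apply: arc_act.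
Qed.

Lemma card_outs x : #|outs x| = #|outs v0|.
Proof. by have [g Hg <-] := vt x; rewrite outs_act // card_act. Qed.

Lemma card_ins x : #|ins x| = #|ins v0|.
Proof. by have [g Hg <-] := vt x; rewrite ins_act // card_act. Qed.

Lemma card_sum (P : pred V) : #|[set y | P y]| = \sum_y P y.
Proof.
rewrite -sum1_card big_mkcond /=; apply: eq_bigr => y _.
by rewrite inE; case: (P y).
Qed.

Lemma outs2 x : #|outs x| = 2.
Proof.
have Hsum : \sum_(x : V) #|outs x| = \sum_(x : V) #|ins x|.
  rewrite (eq_bigr (fun x => \sum_y (arc x y : nat))); last by move=> x' _; rewrite card_sum.
  rewrite [RHS](eq_bigr (fun x => \sum_y (arc y x : nat))); last by move=> x' _; rewrite card_sum.
  exact: exchange_big.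
have E1 : \sum_(x : V) #|outs x| = \sum_(x : V) #|outs v0|.
  by apply: eq_bigr => x' _; rewrite card_outs.
have E2 : \sum_(x : V) #|ins x| = \sum_(x : V) #|ins v0|.
  by apply: eq_bigr => x' _; rewrite card_ins.
move: Hsum; rewrite E1 E2 !sum_nat_const => Heq.
have pos : 0 < #|V| by apply/card_gt0P; exists v0.
move/eqP: Heq; rewrite eqn_mul2l eqn0Ngt pos /= => /eqP Eo.
have := card_nbr_split v0; rewrite card_outs Eo; lia.
Qed.

Lemma ins2 x : #|ins x| = 2.
Proof. by have := card_nbr_split x; rewrite outs2 => /eqP; rewrite eqn_add2l => /eqP. Qed.


Lemma pig3 (S : {set V}) a b c : #|S| <= 2 -> a \in S -> b \in S -> c \in S ->
  [|| a == b, a == c | b == c].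
Proof.
move=> HS Ha Hb Hc; apply/negPn/negP; rewrite !negb_or => /and3P[nab nac nbc].
have sub : c |: [set a; b] \subset S by apply/subsetP=> x; rewrite !inE => /or3P[] /eqP ->.
have := subset_leq_card sub; rewrite cardsU1 cards2 nab !inE negb_or eq_sym nac eq_sym nbc.
by move/leq_trans/(_ HS).
Qed.

Lemma sq_fix_set (S : {set V}) (g : {perm V}) y : #|S| <= 2 ->
  (forall z, z \in S -> g z \in S) -> y \in S -> (g * g) y = y.
Proof.
move=> HS Hst Hy; rewrite permM.
have Hgy := Hst _ Hy; have Hggy := Hst _ Hgy.
case/or3P: (pig3 HS Hy Hgy Hggy) => /eqP E.
- by rewrite -!E.
- by rewrite -E.
- by move/perm_inj: E => E'; rewrite -!E'.
Qed.

Lemma sq_fix g x y : g \in G -> g x = x -> e x y -> (g * g) y = y.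
Proof.
move=> Hg gx exy.
case/orP: (arc_or exy) => H.
  apply: (sq_fix_set (S := outs x)); rewrite ?outs2 ?inE //.
  by move=> z; rewrite !inE => /(arc_act Hg); rewrite gx.
apply: (sq_fix_set (S := ins x)); rewrite ?ins2 ?inE //.
by move=> z; rewrite !inE => /(arc_act Hg); rewrite gx.
Qed.

Lemma odd_fix g x y : g \in G -> odd #[g] -> g x = x -> e x y -> g y = y.
Proof.
move=> Hg og gx exy.
have gg := sq_fix Hg gx exy.
set k := (#[g]).+1./2.
have Eg : g = (g * g) ^+ k.
  rewrite -expg2 -expgnA.
  have -> : (2 * k)%N = #[g].+1.
    have := odd_double_half (#[g]).+1; rewrite /= og /= add0n -/k => <-.
    by rewrite -muln2 mulnC.
  by rewrite expgS expg_order mulg1.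
rewrite Eg; elim: k {Eg} => [|k IH]; first by rewrite expg0 perm1.
by rewrite expgSr permM IH gg.
Qed.

Lemma odd_triv g x : g \in G -> odd #[g] -> g x = x -> g = 1.
Proof.
move=> Hg og gx; apply/permP => z; rewrite perm1.
apply/eqP; apply: (conn_ind (P := fun z => g z == z)) (_ : g x == x); last by rewrite gx.
by move=> z' w ezw /eqP gz; apply/eqP; apply: odd_fix ezw.
Qed.

Lemma stab2 x : 2.-group 'C_G[x | 'P].
Proof.
apply/pgroupP=> p pp pdiv; have [g Hg og] := Cauchy pp pdiv.
case: (even_prime pp) => [-> // | op].
case/setIP: Hg => HgG /astab1P gx.
have g1 : g = 1 by apply: (odd_triv HgG (x := x)); rewrite ?og.
by move: og pp; rewrite g1 order1 => <-.
Qed.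


Definition Kg := (G :&: 'C(quot_vertices N | 'P^*))%G.

Lemma KP g : reflect (g \in G /\ forall x, bl (g x) = bl x) (g \in Kg).
Proof.
apply: (iffP setIP) => [[Hg /astabP HC] | [Hg HB]]; split => //.
  by move=> x; rewrite -bl_act //; apply: HC; apply/imsetP; exists x.
by apply/astabP => _ /imsetP[x _ ->] /=; rewrite bl_act.
Qed.

Lemma sNK : N \subset Kg.
Proof.
by apply/subsetP=> n Hn; apply/KP; split; [apply: sGN | move=> x; apply: bl_N].
Qed.

Lemma K_sol : solvable N -> solvable Kg.
Proof.
move=> solN.
have sKG : Kg \subset G by apply: subsetIl.
have nNK : N <| Kg := normalS sNK sKG HN.
rewrite (series_sol nNK) solN /=.
pose Kv := 'C_Kg[v0 | 'P].
have sKKv : Kg \subset Kv * N.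
  apply/subsetP=> k Hk; case/KP: (Hk) => HkG Hbl.
  have : k v0 \in bl v0 by rewrite -(Hbl v0); apply: orbit_refl.
  case/blP=> n Hn Ev.
  rewrite -(mulgKV n k); apply: imset2_f => //.
  apply/setIP; split; first by rewrite groupM ?groupV // (subsetP sNK).
  apply/astab1P.
  by rewrite /= apermE permM -Ev permK.
have := quotientS N sKKv; rewrite quotientMidr => sub.
apply: solvableS sub _; apply: quotient_sol.
apply: pgroup_sol (pgroupS _ (stab2 v0)).
by apply: setSI.
Qed.


Definition fc x (C : {set V}) := #|[set z | e x z & z \in C]|.

Lemma fc_act g x C : g \in G -> fc (g x) (setact 'P C g) = fc x C.
Proof.
move=> Hg; rewrite /fc -[RHS](card_act _ g); apply: eq_card => z; rewrite inE setactE.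
apply/andP/imsetP => [[exz /imsetP[y Hy Ez]] | [y]].
  subst z; exists y => //; rewrite inE Hy andbT -(aut _ _ Hg); exact: exz.
rewrite inE => /andP[exy Hy] ->; split; first by rewrite aut.
by apply/imsetP; exists y.
Qed.

Lemma fc_N n x y : n \in N -> fc (n x) (bl y) = fc x (bl y).
Proof.
move=> Hn; rewrite -{1}(bl_N y Hn) -bl_act ?sGN //; exact: fc_act (sGN Hn).
Qed.

Lemma card_bl x y : #|bl x| = #|bl y|.
Proof.
suff H : forall z, #|bl z| = #|bl v0| by rewrite !H.
move=> z; have [g Hg <-] := vt z; rewrite -bl_act // setactE; exact: card_act.
Qed.

Lemma card_setC (P : pred V) (C : {set V}) :
  #|[set z | P z & z \in C]| = \sum_(z in C) (P z : nat).
Proof.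
rewrite (card_sum (fun z => P z && (z \in C))) [RHS]big_mkcond /=.
by apply: eq_bigr => z _; case: (P z); case: (z \in C).
Qed.

Lemma fc_sym x y : fc x (bl y) = fc y (bl x).
Proof.
have E : forall x y, \sum_(x' in bl x) fc x' (bl y) = (#|bl x| * fc x (bl y))%N.
  move=> x1 y1; rewrite -sum_nat_const; apply: eq_bigr => x' /blP[n Hn <-].
  exact: fc_N.
have := E x y; rewrite (eq_bigr (fun x' => \sum_(y' in bl y) (e x' y' : nat))); last first.
  by move=> x' _; rewrite /fc card_setC.
rewrite exchange_big /=.
rewrite (eq_bigr (fun y' => fc y' (bl x))); last first.
  by move=> y' _; rewrite /fc card_setC; apply: eq_bigr => x' _; rewrite esym.
rewrite E (card_bl y x) => /eqP; rewrite eqn_mul2l => /orP[| /eqP //].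
have : 0 < #|bl x| by apply/card_gt0P; exists x; apply: orbit_refl.
by rewrite lt0n => /negbTE ->.
Qed.

Definition a := fc v0 (bl u0).

Lemma fc_edge x y : e x y -> fc x (bl y) = a.
Proof.
move/arc_or/orP=> [] /arcP[g Hg [<- <-]]; rewrite -?bl_act // ?fc_act //.
by rewrite fc_sym.
Qed.


Lemma mem_bl_act g x y : g \in G -> (g y \in bl (g x)) = (y \in bl x).
Proof.
move=> Hg; rewrite -bl_act // setactE; apply/imsetP/idP => [[z Hz /perm_inj -> //] | H].
by exists y.
Qed.

Lemma edge_bl x y : e x y -> (y \in bl x) = (u0 \in bl v0).
Proof.
move/arc_or/orP=> [] /arcP[g Hg [<- <-]]; rewrite mem_bl_act //.
by rewrite orbit_sym.
Qed.

Lemma case_in : u0 \in bl v0 -> G \subset Kg.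
Proof.
move=> Hin.
have all_in : forall x, x \in bl v0.
  move=> x; apply: (conn_ind (P := fun z => z \in bl v0) (x := v0)); last exact: orbit_refl.
  move=> z w ezw Hz; have wz : w \in bl z by rewrite edge_bl.
  exact: orbit_trans wz Hz.
apply/subsetP=> g Hg; apply/KP; split=> // x.
by rewrite (orbit_eqP (all_in x)) (orbit_eqP (all_in (g x))).
Qed.

Lemma adj_desc x C : C \in quot_vertices N -> quot_adj e N (bl x) C ->
  exists2 y, e x y & C = bl y.
Proof.
case/imsetP=> z _ -> /andP[_ /existsP[x' /andP[Hx' /existsP[y' /andP[Hy' exy]]]]].
case/blP: Hx' => n Hn Ex.
exists (n^-1 y').
  by have := exy; rewrite -(aut _ _ (sGN (groupVr Hn))) -Ex permK.
by rewrite bl_N ?groupV // (orbit_eqP Hy').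
Qed.

Lemma uniq_nb x y y' : a = 1%N -> e x y -> e x y' -> y' \in bl y -> y' = y.
Proof.
move=> a1 exy exy' Hy'; have := fc_edge exy; rewrite a1 /fc => /eqP/cards1P[z Ez].
have : y \in [set z0 | e x z0 & z0 \in bl y] by rewrite inE exy orbit_refl.
have : y' \in [set z0 | e x z0 & z0 \in bl y] by rewrite inE exy' Hy'.
by rewrite Ez !inE => /eqP -> /eqP ->.
Qed.

Lemma quot_val : u0 \notin bl v0 -> a = 1%N -> quot_regular_of_valency e N 4.
Proof.
move=> Hout a1 B /imsetP[x _ ->]; rewrite -(Hreg x).
have -> : [set C in quot_vertices N | quot_adj e N (bl x) C] =
          [set bl y | y in [set y | e x y]].
  apply/setP=> C; rewrite inE; apply/andP/imsetP => [[HC Hadj] | [y]].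
    by have [y exy ->] := adj_desc HC Hadj; exists y; rewrite ?inE.
  rewrite inE => exy ->; split; first by apply/imsetP; exists y.
  apply/andP; split.
    apply/negP => /eqP E; have := edge_bl exy; rewrite E orbit_refl => H.
    by move: Hout; rewrite -H.
  apply/existsP; exists x; rewrite orbit_refl /=.
  by apply/existsP; exists y; rewrite orbit_refl exy.
apply: card_in_imset => y y'; rewrite !inE => exy exy' E.
apply: (uniq_nb a1 exy' exy); rewrite -E; apply: orbit_refl.
Qed.

Lemma semireg : a = 1%N -> semiregular_perm N.
Proof.
move=> a1 x; apply/trivgP/subsetP=> n /setIP[Hn /astab1P /= nx]; rewrite inE.
apply/eqP/permP=> z; rewrite perm1; apply/eqP.
apply: (conn_ind (x := x) (P := fun z => n z == z)); last by apply/eqP; exact: nx.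
move=> z' w ezw /eqP nz; apply/eqP; apply: (uniq_nb a1 ezw) => //.
  by rewrite -(aut _ _ (sGN Hn)) nz in ezw *.
by rewrite -(bl_N w Hn); apply: orbit_refl.
Qed.


Lemma qadj_imp g B C : g \in G -> quot_adj e N B C ->
  quot_adj e N (setact 'P B g) (setact 'P C g).
Proof.
move=> Hg /andP[nBC /existsP[x /andP[Hx /existsP[y /andP[Hy exy]]]]].
apply/andP; split.
  by apply: contra nBC => /eqP E; apply/eqP; apply: (act_inj ('P^*)%act g).
apply/existsP; exists (g x); rewrite setactE (imset_f _ Hx) /=.
by apply/existsP; exists (g y); rewrite (imset_f _ Hy) aut.
Qed.

Lemma qadj_act g B C : g \in G ->
  quot_adj e N (('P^*)%act B g) (('P^*)%act C g) = quot_adj e N B C.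
Proof.
move=> Hg; apply/idP/idP => H; last exact: qadj_imp.
have := qadj_imp (groupVr Hg) H.
by rewrite -[setact 'P (setact 'P B g) g^-1]/(('P^*)%act (('P^*)%act B g) g^-1) actK
           -[setact 'P (setact 'P C g) g^-1]/(('P^*)%act (('P^*)%act C g) g^-1) actK.
Qed.

Lemma qadj_sym : symmetric (quot_adj e N).
Proof.
move=> B C; rewrite /quot_adj eq_sym; congr (_ && _).
apply/existsP/existsP => [[x /andP[Hx /existsP[y /andP[Hy exy]]]] | [x /andP[Hx /existsP[y /andP[Hy exy]]]]];
  exists y; rewrite Hy /=; apply/existsP; exists x; by rewrite Hx esym.
Qed.

Lemma qadj_irr : irreflexive (quot_adj e N).
Proof. by move=> B; rewrite /quot_adj eqxx. Qed.

Lemma qval : 2 <= a -> forall B, B \in quot_vertices N ->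
  #|[set C in quot_vertices N | quot_adj e N B C]| <= 2.
Proof.
move=> a2 _ /imsetP[x _ ->].
have sub : [set C in quot_vertices N | quot_adj e N (bl x) C] \subset [set bl y | y in nbr x].
  apply/subsetP=> C; rewrite inE => /andP[HC Hadj].
  by have [y exy ->] := adj_desc HC Hadj; apply/imsetP; exists y; rewrite ?inE.
apply: leq_trans (subset_leq_card sub) _.
have H4 : 4 = \sum_(y in nbr x) 1 by rewrite sum1_card; rewrite /nbr (Hreg x).
rewrite (partition_big_imset (fun y => bl y)) /= in H4.
have : \sum_(C in [set bl y | y in nbr x]) 2 <= 4.
  rewrite H4; apply: leq_sum => _ /imsetP[y0 Hy0 ->].
  rewrite (eq_bigl (fun y => y \in [set z | e x z & z \in bl y0])); last first.
    by move=> y; rewrite !inE orbit_eq_mem.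
  rewrite sum1_card -/(fc x (bl y0)) fc_edge //.
  by move: Hy0; rewrite inE.
by rewrite sum_nat_const => H; rewrite -(leq_pmul2r (_ : 0 < 2)).
Qed.

Lemma qconn (P : pred {set V}) B0 : B0 \in quot_vertices N -> P B0 ->
  (forall B C, B \in quot_vertices N -> C \in quot_vertices N ->
     quot_adj e N B C -> P B -> P C) ->
  forall B, B \in quot_vertices N -> P B.
Proof.
move=> /imsetP[x0 _ ->] P0 Hstep _ /imsetP[x _ ->].
apply: (conn_ind (P := fun z => P (bl z)) (x := x0)) => // z w ezw Pz.
case: (eqVneq (bl z) (bl w)) => [<- // | nzw].
have Hz : bl z \in quot_vertices N by apply/imsetP; exists z.
have Hw : bl w \in quot_vertices N by apply/imsetP; exists w.
apply: (Hstep _ _ Hz Hw) => //.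
apply/andP; split => //; apply/existsP; exists z; rewrite orbit_refl /=.
by apply/existsP; exists w; rewrite orbit_refl.
Qed.

Lemma case_dih : u0 \notin bl v0 -> 2 <= a -> G^`(2) \subset Kg.
Proof.
move=> Hout a2.
have HBs : forall g B, g \in G -> B \in quot_vertices N -> ('P^*)%act B g \in quot_vertices N.
  by move=> g _ Hg /imsetP[x _ ->] /=; rewrite bl_act //; apply/imsetP; exists (g x).
have HB0 : bl v0 \in quot_vertices N by apply/imsetP; exists v0.
have HC0 : bl u0 \in quot_vertices N by apply/imsetP; exists u0.
have HBC0 : quot_adj e N (bl v0) (bl u0).
  apply/andP; split.
    apply: contra Hout => /eqP ->; exact: orbit_refl.
  apply/existsP; exists v0; rewrite orbit_refl /=.
  by apply/existsP; exists u0; rewrite orbit_refl.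
have := der2_sub HBs qadj_act qadj_sym (qval a2) qconn HB0 HC0 HBC0.
by move=> H; rewrite subsetI der_sub H.
Qed.


Lemma sol_der1 (H : {group {perm V}}) : solvable H^`(1) -> solvable H.
Proof.
move=> sH; rewrite (series_sol (der_normal 1 H)) sH /=.
exact: abelian_sol (der_abelian 0 H).
Qed.

Lemma main_edge : solvable N -> ~~ solvable G ->
  normal_cover e N 4 /\ semiregular_perm N.
Proof.
move=> solN nsolG.
case: (boolP (u0 \in bl v0)) => Hin.
  by move: nsolG; rewrite (solvableS (case_in Hin) (K_sol solN)).
have a_pos : 0 < a.
  by apply/card_gt0P; exists u0; rewrite inE Hvu orbit_refl.
case: (eqVneq a 1%N) => a1.
  by split; [split => //; apply: quot_val | apply: semireg].
have a2 : 2 <= a by rewrite ltn_neqAle eq_sym a1 a_pos.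
exfalso; move/negP: nsolG; apply.
apply: sol_der1; apply: sol_der1.
exact: solvableS (case_dih Hin a2) (K_sol solN).
Qed.

End Main.

Unset Implicit Arguments.

Theorem lemma3p1 (V : finType) (e : rel V) (G N : {group {perm V}}) :
  simple_graph e ->
  connected_graph e ->
  regular_of_valency e 4 ->
  G \subset graph_aut e ->
  half_arc_transitive e G ->
  N <| G ->
  solvable N ->
  ~~ solvable G ->
  (normal_cover e N 4) /\ (semiregular_perm N).
Proof.
move=> Hsimp Hcon Hreg HGaut Hhat HN solN nsolG.
case: (boolP [exists v, exists u, e v u]) => [/existsP[v0 /existsP[u0 Hvu]] | H].
  exact: (main_edge Hsimp Hcon Hreg HGaut Hhat HN Hvu solN nsolG).
exfalso; case: Hhat => _ _; apply=> x y u v exy.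
by move: H; rewrite negb_exists => /forallP/(_ x); rewrite negb_exists => /forallP/(_ y); rewrite exy.
Qed.
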